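(* Let $t\in(0,1)$. For all $\eta$ sufficiently close to $t$, all $\theta\in\mathbb R/2\pi\mathbb Z$ and $z\in\mathbb H$, the function $P\mapsto|K_\eta(z,P)|$ has a unique maximum point on $\Sigma_{t,\theta}$.
   Context: $\mathbb H=\{x+iy:y>0\}$; $\mathbb H^{\mathbb C}=\mathbb C^2\ni P=(X(P),Y(P))$ with $\mathbb H$ embedded as real points; $Z=X+iY$, $\tilde Z=X-iY$; $\cosh\mathrm{dist}(x+iy,P):=1+\frac{(x-X)^2+(y-Y)^2}{2yY}$. For $\eta\in(0,1)$, $c_\eta=\frac4{4\eta-\eta^3}$ and $K_\eta(z,P)=\frac{z-\tilde Z(P)}{\bar z-Z(P)}e^{-c_\eta\cosh\mathrm{dist}(z,P)}$. $h_t(z,\theta)$: point at time $t$ of the unit-speed right horocycle (image of $t\mapsto -t+i$ under an orientation-preserving isometry) starting at $z=x+iy$ with velocity $y(\cos\theta\partial_x+\sin\theta\partial_y)$, continued holomorphically to complex $t$ with $|\Im t|<1$ as a point of $\mathbb C^2$. $\Sigma_{t,\theta}:=\{h_{-it}(z,\theta):z\in\mathbb H\}$. *)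

(* Defs.v *)
From Stdlib Require Import Reals.
From Coquelicot Require Import Coquelicot.
Open Scope R_scope.

Definition cexp (w : C) : C := (exp (Re w) * cos (Im w), exp (Re w) * sin (Im w)).

(* Points of H^C = C^2 : P = (X(P), Y(P)). *)
Definition PX (P : C * C) : C := fst P.
Definition PY (P : C * C) : C := snd P.
Definition PZ (P : C * C) : C := (PX P + Ci * PY P)%C.
Definition PZt (P : C * C) : C := (PX P - Ci * PY P)%C.

Definition cosh_dist (z : C) (P : C * C) : C :=
  (1 + ((RtoC (Re z) - PX P) * (RtoC (Re z) - PX P)
        + (RtoC (Im z) - PY P) * (RtoC (Im z) - PY P))
       / (2 * RtoC (Im z) * PY P))%C.

Definition c_eta (eta : R) : R := 4 / (4 * eta - eta ^ 3).

Definition K_eta (eta : R) (z : C) (P : C * C) : C :=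
  ((z - PZt P) / (Cconj z - PZ P) * cexp (- RtoC (c_eta eta) * cosh_dist z P))%C.

(* Rotation about i by angle phi (an element of PSL_2(R) fixing i, whose
   differential at i is multiplication by e^{i phi}):
   k_phi(w) = (cos(phi/2) w + sin(phi/2)) / (-sin(phi/2) w + cos(phi/2)),
   evaluated at complex w. *)
Definition rot_i (phi : R) (w : C) : C :=
  ((RtoC (cos (phi / 2)) * w + RtoC (sin (phi / 2)))
   / (- RtoC (sin (phi / 2)) * w + RtoC (cos (phi / 2))))%C.

(* The orientation-preserving isometry g(w) = x + y k_{theta - pi}(w) maps i to
   z = x+iy and the unit vector -d_x at i to y(cos theta d_x + sin theta d_y).
   Hence the unit-speed right horocycle is h_s(z,theta) = g(-s + i), s real.
   Its coordinates, for real s, are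
     X = x + y (k(-s+i) + k(-s-i))/2,   Y = y (k(-s+i) - k(-s-i))/(2i)
   (k has real coefficients, so k(-s-i) = conj k(-s+i)); these expressions are
   holomorphic in s, and give the holomorphic continuation to complex s with
   |Im s| < 1 as a point of C^2. *)
Definition horo (s : C) (z : C) (theta : R) : C * C :=
  let k := rot_i (theta - PI) in
  let a := k (- s + Ci)%C in
  let b := k (- s - Ci)%C in
  ((RtoC (Re z) + RtoC (Im z) * (a + b) / 2)%C,
   (RtoC (Im z) * (a - b) / (2 * Ci))%C).

Definition Sigma (t theta : R) (P : C * C) : Prop :=
  exists w : C, 0 < Im w /\ P = horo (- (Ci * RtoC t))%C w theta.

(* Main.v *)
Require Import Defs.
From Stdlib Require Import Reals.
From Coquelicot Require Import Coquelicot.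
From Stdlib Require Import Lra Psatz.
Open Scope R_scope.
Section Real.
Variables t c : R.
Hypothesis ht : 0 < t < 1.
Hypothesis hc : 0 < c.

Definition gpol (v : R) : R := c * (v*v - (1 - t*t)) * (v*v + 2*v + (1 - t*t)) - 4*t*(v*v).

Definition psi (v : R) : R := (v + 1 - t) / (v + 1 + t) * exp (- c * (v*v + 1 - t*t) / (2*v)).

Lemma gpol_root : exists vs, 0 < vs /\ gpol vs = 0 /\
  (forall v, 0 < v < vs -> gpol v < 0) /\ (forall v, vs < v -> 0 < gpol v).
Proof.
  set (rr := sqrt (1 - t*t)).
  assert (hr2 : rr * rr = 1 - t*t) by (apply sqrt_sqrt; nra).
  assert (hr0 : 0 < rr) by (apply sqrt_lt_R0; nra).
  set (V := 1 + rr + 4*t/c).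
  assert (h4 : 0 < 4*t/c) by (apply Rdiv_lt_0_compat; lra).
  assert (hc1 : c * (4*t/c) = 4*t) by (field; lra).
  assert (hcont : continuity gpol).
  { unfold gpol. intros x. apply derivable_continuous_pt.
    reg. }
  assert (hrV : rr < V) by (unfold V; lra).
  assert (hgr : gpol rr < 0).
  { unfold gpol. rewrite hr2. nra. }
  assert (hgV : 0 < gpol V).
  { unfold gpol. assert (1 <= V) by (unfold V; lra).
    assert (V*V - (1 - t*t) > 4*t/c) by (unfold V in *; nra).
    assert (c * (V*V - (1-t*t)) > 4*t) by nra.
    nra. }
  destruct (IVT gpol rr V hcont hrV hgr hgV) as [vs [[h1 h2] h3]].
  assert (hvs : rr < vs) by (destruct h1 as [h1|h1]; [lra| subst; lra]).
  (* monotonicity of h(v) = gpol v / v^2 for v > rr *)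
  assert (key : forall a b, rr <= a -> a < b -> gpol a * (b*b) < gpol b * (a*a)).
  { intros a b ha hab.
    unfold gpol. rewrite <- hr2.
    assert (e1 : 0 <= a*a - rr*rr) by nra.
    assert (eab : a*a < b*b) by nra.
    assert (err : 0 < rr*rr) by nra.
    assert (e2 : (a*a - rr*rr)*(b*b) < (b*b - rr*rr)*(a*a)) by nra.
    assert (e3 : 0 < a*a + 2*a + rr*rr) by nra.
    assert (e4 : a*a + 2*a + rr*rr < b*b + 2*b + rr*rr) by nra.
    assert (e5 : (a*a - rr*rr)*(b*b) * (a*a + 2*a + rr*rr) < (b*b - rr*rr)*(a*a) * (b*b + 2*b + rr*rr)).
    { assert (0 <= (a*a - rr*rr)*(b*b)) by nra. nra. }
    nra. }
  exists vs; repeat split; try lra.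
  - intros v [hv1 hv2].
    destruct (Rle_lt_dec v rr) as [hvr|hvr].
    + unfold gpol. rewrite <- hr2.
      assert (f1 : v*v - rr*rr <= 0) by nra.
      assert (f2 : 0 < v*v + 2*v + rr*rr) by nra.
      assert (f3 : c * (v*v - rr*rr) <= 0) by nra.
      assert (f4 : c * (v*v - rr*rr) * (v*v + 2*v + rr*rr) <= 0) by nra.
      assert (f5 : 0 < t * (v*v)) by (apply Rmult_lt_0_compat; nra).
      lra.
    + pose proof (key v vs (Rlt_le _ _ hvr) hv2). rewrite h3 in H. nra.
  - intros v hv. pose proof (key vs v (Rlt_le _ _ hvs) hv). rewrite h3 in H. nra.
Qed.


Definition dpsi (v : R) : R :=
  - exp (- c * (v*v + 1 - t*t) / (2*v)) * gpol v / (2*(v*v)*((v+1+t)*(v+1+t))).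

Lemma psi_deriv : forall v, 0 < v -> derivable_pt_lim psi v (dpsi v).
Proof.
  intros v hv. apply is_derive_Reals. unfold psi, dpsi, gpol.
  auto_derive.
  - split; [lra|]. split; [lra| exact I].
  - replace (- c * (v * v + 1 + - (t * t)) * / (2 * v)) with (- c * (v*v+1-t*t)/(2*v)) by (unfold Rdiv, Rminus; ring).
    field. lra.
Qed.

Lemma psi_max : exists vs, 0 < vs /\ forall v, 0 < v -> v <> vs -> psi v < psi vs.
Proof.
  destruct gpol_root as [vs [hvs [h0 [hl hr]]]].
  exists vs; split; auto.
  intros v hv hne.
  assert (dpos : forall x, 0 < x -> 0 < 2*(x*x)*((x+1+t)*(x+1+t))).
  { intros x hx. apply Rmult_lt_0_compat; nra. }
  destruct (Rlt_or_le v vs) as [hlt|hge].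
  - destruct (MVT_cor2 psi dpsi v vs hlt) as [x [hx1 hx2]].
    { intros x hx. apply psi_deriv. lra. }
    assert (0 < dpsi x).
    { unfold dpsi. pose proof (hl x ltac:(lra)). pose proof (exp_pos (- c * (x*x + 1 - t*t) / (2*x))).
      pose proof (Rinv_0_lt_compat _ (dpos x ltac:(lra))).
      unfold Rdiv at 2. apply Rmult_lt_0_compat; auto. nra. }
    nra.
  - assert (hlt : vs < v) by lra.
    destruct (MVT_cor2 psi dpsi vs v hlt) as [x [hx1 hx2]].
    { intros x hx. apply psi_deriv. lra. }
    assert (dpsi x < 0).
    { unfold dpsi. pose proof (hr x ltac:(lra)). pose proof (exp_pos (- c * (x*x + 1 - t*t) / (2*x))).
      pose proof (Rinv_0_lt_compat _ (dpos x ltac:(lra))).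
      unfold Rdiv at 2. 
      assert (- exp (- c * (x * x + 1 - t * t) / (2 * x)) * gpol x < 0) by nra.
      nra. }
    nra.
Qed.


Definition Phi (u v : R) : R :=
  sqrt ((u*u + (v+1-t)*(v+1-t)) / (u*u + (v+1+t)*(v+1+t))) *
  exp (- c * (u*u + v*v + 1 - t*t) / (2*v)).

Lemma Phi0 : forall v, 0 < v -> Phi 0 v = psi v.
Proof.
  intros v hv. unfold Phi, psi.
  f_equal; [| f_equal; field; lra].
  replace ((0 * 0 + (v + 1 - t) * (v + 1 - t)) / (0 * 0 + (v + 1 + t) * (v + 1 + t)))
    with (Rsqr ((v + 1 - t) / (v + 1 + t))) by (unfold Rsqr; field; lra).
  apply sqrt_Rsqr. apply Rlt_le, Rdiv_lt_0_compat; lra.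
Qed.

Lemma apol : forall u v, 0 < v -> exists v', 0 < v' /\ Phi u v <= psi v' /\ (u <> 0 -> Phi u v < psi v').
Proof.
  intros u v hv.
  set (p := v+1-t). set (q := v+1+t).
  assert (hp : 0 < p) by (unfold p; lra). assert (hq : p < q) by (unfold p, q; lra).
  assert (hu2 : 0 <= u*u) by nra.
  set (Rr := (u*u + p*p) / (u*u + q*q)).
  assert (hden : 0 < u*u + q*q) by nra.
  assert (E1 : Rr * (u*u + q*q) = u*u + p*p) by (unfold Rr; field; lra).
  assert (hR0 : 0 < Rr) by (unfold Rr; apply Rdiv_lt_0_compat; nra).
  assert (hR1 : Rr < 1) by nra.
  set (rho := sqrt Rr).
  assert (hrho2 : rho * rho = Rr) by (apply sqrt_sqrt; lra).
  assert (hrho0 : 0 < rho) by (apply sqrt_lt_R0; lra).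
  assert (hrho1 : rho < 1) by nra.
  assert (hRpq : p*p <= Rr * (q*q)) by nra.
  assert (hrq : p <= rho * q).
  { destruct (Rle_or_lt p (rho*q)) as [h|h]; auto.
    assert (0 <= rho*q) by nra.
    assert (HH : rho*q*(rho*q) < p*p) by nra.
    replace (rho*q*(rho*q)) with ((rho*rho)*(q*q)) in HH by ring. rewrite hrho2 in HH. lra. }
  set (v' := (rho*(1+t) - (1-t)) / (1 - rho)).
  assert (hvv : v <= v').
  { unfold v'. apply Rmult_le_reg_r with (1 - rho); [lra|].
    unfold Rdiv. rewrite Rmult_assoc, Rinv_l by lra. unfold p, q in hrq. nra. }
  exists v'. split; [lra|].
  assert (hr1 : v' + 1 - t = 2*t*rho/(1-rho)) by (unfold v'; field; lra).
  assert (hr2 : v' + 1 + t = 2*t/(1-rho)) by (unfold v'; field; lra).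
  assert (hratio : (v'+1-t)/(v'+1+t) = rho) by (rewrite hr1, hr2; field; split; lra).
  set (N := (1-Rr)*(1-t*t) - (1-t)*(1-t) + Rr*((1+t)*(1+t))).
  assert (hN : 0 < N).
  { unfold N. assert (0 < (1-Rr)*(1-t*t)) by (apply Rmult_lt_0_compat; nra). nra. }
  assert (X1 : (1-Rr) * ((u*u + v*v + 1 - t*t)/(2*v)) = (-2*v*((1-t) - Rr*(1+t)) + N)/(2*v)).
  { unfold Rdiv. rewrite <- Rmult_assoc. f_equal. unfold N. unfold p, q in E1. nra. }
  assert (E2 : rho*rho * ((v'+1+t)*(v'+1+t)) = (v'+1-t)*(v'+1-t)).
  { rewrite hr1, hr2. field. lra. }
  rewrite hrho2 in E2.
  assert (X2 : (1-Rr) * ((v'*v' + 1 - t*t)/(2*v')) = (-2*v'*((1-t) - Rr*(1+t)) + N)/(2*v')).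
  { unfold Rdiv. rewrite <- Rmult_assoc. f_equal. unfold N. nra. }
  assert (key : (1-Rr) * ((u*u + v*v + 1 - t*t)/(2*v) - (v'*v' + 1 - t*t)/(2*v')) = N/(2*v) - N/(2*v')).
  { rewrite Rmult_minus_distr_l, X1, X2. field. lra. }
  assert (hNv : N/(2*v') <= N/(2*v)).
  { unfold Rdiv. apply Rmult_le_compat_l; [lra|]. apply Rinv_le_contravar; lra. }
  assert (hX : (v'*v' + 1 - t*t)/(2*v') <= (u*u + v*v + 1 - t*t)/(2*v)).
  { assert (0 <= (1-Rr) * ((u*u + v*v + 1 - t*t)/(2*v) - (v'*v' + 1 - t*t)/(2*v'))) by lra.
    nra. }
  assert (hPhi : Phi u v = rho * exp (- c * (u*u + v*v + 1 - t*t) / (2*v))) by reflexivity.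
  assert (hpsi : psi v' = rho * exp (- c * ((v'*v' + 1 - t*t)/(2*v')))).
  { unfold psi. rewrite hratio. f_equal. f_equal. field. lra. }
  replace (- c * (u*u + v*v + 1 - t*t) / (2*v)) with (- c * ((u*u + v*v + 1 - t*t)/(2*v))) in hPhi
    by (field; lra).
  split.
  - rewrite hPhi, hpsi. apply Rmult_le_compat_l; [lra|].
    destruct (Req_dec ((v'*v' + 1 - t*t)/(2*v')) ((u*u + v*v + 1 - t*t)/(2*v))) as [e|e].
    + rewrite e. lra.
    + apply Rlt_le, exp_increasing. nra.
  - intros hu0.
    assert (hRs : p*p < Rr * (q*q)).
    { assert (0 < u*u) by (destruct (Rlt_or_le 0 u); nra).
      assert (Rr * (u*u) < u*u) by nra. nra. }
    assert (hrq' : p < rho * q).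
    { destruct (Rlt_or_le p (rho*q)) as [h|h]; auto.
      assert (0 <= rho*q) by nra.
      assert (HH : rho*q*(rho*q) <= p*p) by nra.
      replace (rho*q*(rho*q)) with ((rho*rho)*(q*q)) in HH by ring. rewrite hrho2 in HH. lra. }
    assert (hvv' : v < v').
    { unfold v'. apply Rmult_lt_reg_r with (1 - rho); [lra|].
      unfold Rdiv. rewrite Rmult_assoc, Rinv_l by lra. unfold p, q in hrq'. nra. }
    assert (hNv' : N/(2*v') < N/(2*v)).
    { unfold Rdiv. apply Rmult_lt_compat_l; [lra|]. apply Rinv_lt_contravar; nra. }
    rewrite hPhi, hpsi. apply Rmult_lt_compat_l; [lra|].
    apply exp_increasing.
    assert (0 < (1-Rr) * ((u*u + v*v + 1 - t*t)/(2*v) - (v'*v' + 1 - t*t)/(2*v'))) by lra.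
    assert ((v'*v' + 1 - t*t)/(2*v') < (u*u + v*v + 1 - t*t)/(2*v)) by nra.
    nra.
Qed.

Lemma Phi_max : exists vs, 0 < vs /\ forall u v, 0 < v ->
  Phi u v <= Phi 0 vs /\ (Phi u v = Phi 0 vs -> u = 0 /\ v = vs).
Proof.
  destruct psi_max as [vs [hvs hmax]].
  exists vs. split; auto. intros u v hv.
  rewrite (Phi0 vs hvs).
  destruct (apol u v hv) as [v' [hv' [hle hlt]]].
  assert (hpv : psi v' <= psi vs).
  { destruct (Req_dec v' vs) as [e|e]; [subst; lra|]. apply Rlt_le, hmax; auto. }
  split; [lra|].
  intros heq.
  destruct (Req_dec u 0) as [hu|hu].
  - split; auto. subst u. rewrite Phi0 in heq by auto.
    destruct (Req_dec v vs) as [e|e]; auto.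
    pose proof (hmax v hv e). lra.
  - pose proof (hlt hu). lra.
Qed.

End Real.

Lemma C_neq_im (w : C) : Im w <> 0 -> w <> 0%C.
Proof. intros h e. subst. simpl in h. lra. Qed.

Lemma RtoC_conj (a : R) : Cconj (RtoC a) = RtoC a.
Proof. unfold Cconj, RtoC. simpl. f_equal. ring. Qed.

Section Mob.
Variables Co Si : R.
Hypothesis hD : Co*Co + Si*Si = 1.

Definition mm (w : C) : C := (- RtoC Si * w + RtoC Co)%C.
Definition kk (w : C) : C := ((RtoC Co * w + RtoC Si) / mm w)%C.

Lemma mm_nz (w : C) : Im w <> 0 -> mm w <> 0%C.
Proof.
  intros h e. destruct w as [a b]. unfold mm in e.
  apply (f_equal fst) in e as e1. apply (f_equal snd) in e as e2.
  simpl in *. 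
  assert (Si = 0) by (apply (Rmult_eq_reg_r b); [|auto]; lra).
  subst. nra.
Qed.

Lemma D1 : (RtoC Co * RtoC Co + RtoC Si * RtoC Si)%C = 1%C.
Proof. rewrite <- RtoC_mult, <- RtoC_mult, <- RtoC_plus, hD. reflexivity. Qed.

Lemma kdiff (w1 w2 : C) : mm w1 <> 0%C -> mm w2 <> 0%C ->
  (kk w1 - kk w2 = (w1 - w2) / (mm w1 * mm w2))%C.
Proof.
  intros h1 h2. unfold kk.
  transitivity ((RtoC Co * RtoC Co + RtoC Si * RtoC Si) * (w1 - w2) / (mm w1 * mm w2))%C.
  - unfold mm in *. field. split; auto.
  - rewrite D1. field. split; auto.
Qed.

Lemma mm_conj (w : C) : Cconj (mm w) = mm (Cconj w).
Proof. unfold mm. rewrite Cplus_conj, Cmult_conj, Copp_conj, !RtoC_conj. reflexivity. Qed.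

Lemma kk_conj (w : C) : mm w <> 0%C -> Cconj (kk w) = kk (Cconj w).
Proof.
  intros h. unfold kk. rewrite Cdiv_conj by auto. rewrite mm_conj, Cplus_conj, Cmult_conj, !RtoC_conj.
  reflexivity.
Qed.

Lemma kk_im (w : C) : Im w <> 0 -> Im (kk w) = Im w / ((Co - Si * Re w)^2 + (Si * Im w)^2).
Proof.
  intros h. destruct w as [a b]. simpl in h.
  assert (hn : (Co - Si * a)^2 + (Si * b)^2 <> 0).
  { intro e. pose proof (mm_nz (a,b) h). apply H. unfold mm.
    pose proof (pow2_ge_0 (Co - Si*a)). pose proof (pow2_ge_0 (Si*b)).
    assert (e1 : (Si * b)^2 = 0) by lra. assert (e2 : (Co - Si*a)^2 = 0) by lra.
    simpl in e1, e2. rewrite Rmult_1_r in e1, e2.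
    apply Rmult_integral in e1. apply Rmult_integral in e2.
    assert (f1 : Si * b = 0) by (destruct e1; auto). assert (f2 : Co - Si*a = 0) by (destruct e2; auto).
    assert (f3 : Si = 0) by (apply (Rmult_eq_reg_r b); [|auto]; lra).
    exfalso. rewrite f3 in f2. assert (f4 : Co = 0) by lra. rewrite f3, f4 in hD. lra. }
  unfold kk, mm, Cdiv, Cmult, Cinv, Cplus, Copp, RtoC. simpl. simpl in hn.
  transitivity (b * (Co*Co+Si*Si) / ((Co - Si * a) * ((Co - Si * a) * 1) + Si * b * (Si * b * 1))).
  - field. simpl in hn. lra.
  - rewrite hD. field. lra.
Qed.

End Mob.

Lemma kk_inv (Co Si : R) (hD : Co*Co + Si*Si = 1) (w : C) :
  Im w <> 0 -> kk Co Si (kk Co (-Si) w) = w.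
Proof.
  intros h.
  assert (hd : mm Co (-Si) w <> 0%C) by (apply mm_nz; auto; lra).
  assert (hD' := D1 Co Si hD).
  unfold kk at 1.
  set (n := (RtoC Co * w + RtoC (- Si))%C). set (d := mm Co (-Si) w).
  assert (e1 : (RtoC Co * (n / d) + RtoC Si = (RtoC Co * n + RtoC Si * d) / d)%C) by (field; auto).
  assert (e2 : (mm Co Si (n / d) = (- RtoC Si * n + RtoC Co * d) / d)%C) by (unfold mm; field; auto).
  assert (e3 : (RtoC Co * n + RtoC Si * d = w)%C).
  { unfold n, d, mm. rewrite RtoC_opp.
    transitivity ((RtoC Co * RtoC Co + RtoC Si * RtoC Si) * w)%C; [ring|]. rewrite hD'. ring. }
  assert (e4 : (- RtoC Si * n + RtoC Co * d = 1)%C).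
  { unfold n, d, mm. rewrite RtoC_opp.
    transitivity ((RtoC Co * RtoC Co + RtoC Si * RtoC Si))%C; [ring|]. exact hD'. }
  change (kk Co (-Si) w) with (n / d)%C. rewrite e1, e2, e3, e4. field. auto.
Qed.

Lemma Cmod_cexp (w : C) : Cmod (cexp w) = exp (Re w).
Proof.
  destruct w as [a b]. unfold Cmod, cexp, Re, Im. cbn [fst snd].
  transitivity (sqrt (exp a ^ 2)); [| apply sqrt_pow2; apply Rlt_le, exp_pos].
  f_equal. pose proof (sin2_cos2 b). unfold Rsqr in H.
  replace ((exp a * cos b) ^ 2 + (exp a * sin b) ^ 2)
    with ((exp a)^2 * (sin b * sin b + cos b * cos b)) by ring.
  rewrite H. ring.
Qed.

Lemma Cinv_nz (a : C) : a <> 0%C -> (/ a)%C <> 0%C.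
Proof. intros h e. pose proof (Cinv_r a h) as H. rewrite e, Cmult_0_r in H.
  apply (f_equal fst) in H. simpl in H. lra. Qed.

Lemma Ci_nz : Ci <> 0%C.
Proof. intro e. apply (f_equal snd) in e. simpl in e. lra. Qed.

Lemma cd_id (x y z1 z2 : R) (A B : C) :
  ((RtoC (x + y*z1) - (RtoC x + RtoC y * (A + B) / 2)) * (RtoC (x + y*z1) - (RtoC x + RtoC y * (A + B) / 2))
   + (RtoC (y * z2) - RtoC y * (A - B) / (2 * Ci)) * (RtoC (y * z2) - RtoC y * (A - B) / (2 * Ci)))%C
  = (RtoC y * RtoC y * ((RtoC z1 + Ci * RtoC z2) - A) * ((RtoC z1 - Ci * RtoC z2) - B))%C.
Proof.
  destruct A as [a1 a2], B as [b1 b2].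
  unfold Cminus, Cdiv, Cmult, Cplus, Copp, Cinv, RtoC, Ci. simpl.
  apply injective_projections; simpl; field.
Qed.

Lemma a0_eq (t : R) : (- - (Ci * RtoC t) + Ci)%C = (0, 1 + t).
Proof. unfold Ci, RtoC, Cmult, Copp, Cplus. simpl. apply injective_projections; simpl; ring. Qed.
Lemma b0_eq (t : R) : (- - (Ci * RtoC t) - Ci)%C = (0, t - 1).
Proof. unfold Ci, RtoC, Cmult, Copp, Cplus, Cminus. simpl. apply injective_projections; simpl; ring. Qed.

Lemma Cmod_RtoC_pos (y : R) : 0 < y -> Cmod (RtoC y) = y.
Proof. intros h. rewrite Cmod_R. apply Rabs_pos_eq. lra. Qed.

Lemma Cmod_nz (w : C) : w <> 0%C -> Cmod w <> 0.
Proof. intros h e. apply h. apply Cmod_eq_0. auto. Qed.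

Lemma re_im_C (w : C) : (RtoC (Re w) + Ci * RtoC (Im w))%C = w.
Proof. destruct w as [a b]. unfold Ci, RtoC, Cmult, Cplus. simpl. apply injective_projections; simpl; ring. Qed.
Lemma re_im_Cc (w : C) : (RtoC (Re w) - Ci * RtoC (Im w))%C = Cconj w.
Proof. destruct w as [a b]. unfold Ci, RtoC, Cmult, Cplus, Cminus, Copp, Cconj. simpl. apply injective_projections; simpl; ring. Qed.

Section Main.
Variables t eta theta : R.
Hypothesis ht : 0 < t < 1.
Let Co := cos ((theta - PI) / 2).
Let Si := sin ((theta - PI) / 2).
Lemma hD : Co*Co + Si*Si = 1.
Proof. unfold Co, Si. pose proof (sin2_cos2 ((theta - PI) / 2)). unfold Rsqr in H. lra. Qed.

Definition a0 : C := (0, 1 + t).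
Definition b0 : C := (0, t - 1).
Definition kappa : R := Cmod (mm Co Si a0) / Cmod (mm Co Si b0).

Lemma horo_eq (w : C) : horo (- (Ci * RtoC t))%C w theta =
  ((RtoC (Re w) + RtoC (Im w) * (kk Co Si a0 + kk Co Si b0) / 2)%C,
   (RtoC (Im w) * (kk Co Si a0 - kk Co Si b0) / (2 * Ci))%C).
Proof. unfold horo. rewrite a0_eq, b0_eq. reflexivity. Qed.


Lemma K_formula (w : C) (u v : R) (z : C) :
  0 < Im w -> 0 < v ->
  z = (RtoC (Re w) + RtoC (Im w) * kk Co Si (u, v))%C ->
  Cmod (K_eta eta z (horo (- (Ci * RtoC t))%C w theta)) =
  kappa * (sqrt ((u*u + (v+1-t)*(v+1-t)) / (u*u + (v+1+t)*(v+1+t))) *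
           exp (- c_eta eta * (u*u + v*v + 1 - t*t) / (2*v))).
Proof.
  intros hy hv hz.
  pose proof hD as hD.
  rewrite horo_eq. unfold K_eta, PZt, PZ, PX, PY, cosh_dist. cbn [fst snd].
  set (x := Re w) in *. set (y := Im w) in *.
  set (xi := (u, v)) in *.
  set (A := kk Co Si a0). set (B := kk Co Si b0). set (ze := kk Co Si xi) in *.
  assert (hmxi : mm Co Si xi <> 0%C) by (apply mm_nz; auto; simpl; lra).
  assert (hmxic : mm Co Si (Cconj xi) <> 0%C) by (apply mm_nz; auto; simpl; lra).
  assert (hma : mm Co Si a0 <> 0%C) by (apply mm_nz; auto; simpl; lra).
  assert (hmb : mm Co Si b0 <> 0%C) by (apply mm_nz; auto; simpl; lra).
  assert (hzeim : 0 < Im ze).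
  { unfold ze. rewrite kk_im by (auto; unfold xi; simpl; lra). unfold xi. cbn [Re Im fst snd].
    apply Rdiv_lt_0_compat; auto.
    destruct (Req_dec Si 0) as [e|e].
    - rewrite e in *. assert (Co*Co = 1) by lra. simpl. nra.
    - assert (0 < (Si*v)^2) by (apply pow2_gt_0; intro h; apply Rmult_integral in h; destruct h; lra).
      pose proof (pow2_ge_0 (Co - Si*u)). lra. }
  assert (hzc : Cconj z = (RtoC x + RtoC y * Cconj ze)%C).
  { rewrite hz, Cplus_conj, Cmult_conj, !RtoC_conj. reflexivity. }
  assert (hRz : Re z = x + y * Re ze) by (rewrite hz; unfold RtoC, Cplus, Cmult; simpl; ring).
  assert (hIz : Im z = y * Im ze) by (rewrite hz; unfold RtoC, Cplus, Cmult; simpl; ring).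
  assert (hyC : RtoC y <> 0%C) by (intro e; apply RtoC_inj in e; lra).
  assert (hN : (z - (RtoC x + RtoC y * (A + B) / 2 - Ci * (RtoC y * (A - B) / (2 * Ci))))%C
               = (RtoC y * (ze - B))%C).
  { rewrite hz. field. apply Ci_nz. }
  assert (hDn : (Cconj z - (RtoC x + RtoC y * (A + B) / 2 + Ci * (RtoC y * (A - B) / (2 * Ci))))%C
               = (RtoC y * (Cconj ze - A))%C).
  { rewrite hzc. field. apply Ci_nz. }
  assert (hzec : Cconj ze = kk Co Si (Cconj xi)) by (apply kk_conj; auto).
  assert (hd1 : (ze - B = (xi - b0) / (mm Co Si xi * mm Co Si b0))%C) by (apply kdiff; auto).
  assert (hd2 : (Cconj ze - A = (Cconj xi - a0) / (mm Co Si (Cconj xi) * mm Co Si a0))%C)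
    by (rewrite hzec; apply kdiff; auto).
  assert (hd3 : (ze - A = (xi - a0) / (mm Co Si xi * mm Co Si a0))%C) by (apply kdiff; auto).
  assert (hd4 : (Cconj ze - B = (Cconj xi - b0) / (mm Co Si (Cconj xi) * mm Co Si b0))%C)
    by (rewrite hzec; apply kdiff; auto).
  assert (hd5 : (ze - Cconj ze = (xi - Cconj xi) / (mm Co Si xi * mm Co Si (Cconj xi)))%C)
    by (rewrite hzec; apply kdiff; auto).
  assert (hd6 : (A - B = (a0 - b0) / (mm Co Si a0 * mm Co Si b0))%C) by (apply kdiff; auto).
  assert (hxixc : (xi - Cconj xi)%C <> 0%C) by (apply C_neq_im; unfold xi; simpl; lra).
  assert (hab : (a0 - b0)%C <> 0%C) by (apply C_neq_im; unfold a0, b0; simpl; lra).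
  rewrite Cmod_mult, Cmod_cexp.
  rewrite hN, hDn.
  assert (hA : (Cconj xi - a0)%C <> 0%C) by (apply C_neq_im; unfold xi, a0; simpl; lra).
  assert (hB : (xi - b0)%C <> 0%C) by (apply C_neq_im; unfold xi, b0; simpl; lra).
  unfold PX, PY; cbn [fst snd].
  rewrite hRz, hIz, cd_id, re_im_C, re_im_Cc, RtoC_mult, (im_alt ze).
  rewrite hd1, hd2, hd3, hd4, hd5, hd6.
  match goal with |- context [exp (Re ?E)] =>
    replace E with (- RtoC (c_eta eta) * (1 + (2*Ci)*(2*Ci)*(xi - a0)*(Cconj xi - b0)/(2*(xi - Cconj xi)*(a0-b0))))%C
  end.
  2:{ field. repeat split; auto using Ci_nz. }
  assert (hRe : Re (- RtoC (c_eta eta) * (1 + (2*Ci)*(2*Ci)*(xi - a0)*(Cconj xi - b0)/(2*(xi - Cconj xi)*(a0-b0))))%C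
    = - c_eta eta * (u * u + v * v + 1 - t * t) / (2 * v)).
  { unfold xi, a0, b0, Ci, Cconj, RtoC, Cmult, Cplus, Cminus, Copp, Cdiv, Cinv, Re. simpl.
    field. split; [lra|]. nra. }
  rewrite hRe. clear hRe.
  assert (hmxi' := Cmod_nz _ hmxi). assert (hma' := Cmod_nz _ hma). assert (hmb' := Cmod_nz _ hmb).
  assert (hA' := Cmod_nz _ hA).
  assert (hmc : Cmod (mm Co Si (Cconj xi)) = Cmod (mm Co Si xi)) by (rewrite <- mm_conj, Cmod_conj; auto).
  rewrite Cmod_div.
  2:{ apply Cmult_neq_0; [auto|]. unfold Cdiv. apply Cmult_neq_0; auto. apply Cinv_nz. apply Cmult_neq_0; auto. }
  rewrite !Cmod_mult, !Cmod_div by (apply Cmult_neq_0; auto).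
  rewrite !Cmod_mult, hmc, Cmod_R, Rabs_pos_eq by lra.
  assert (e1 : Cmod (xi - b0) = sqrt (u * u + (v + 1 - t) * (v + 1 - t))).
  { unfold Cmod, xi, b0. simpl. f_equal. ring. }
  assert (e2 : Cmod (Cconj xi - a0) = sqrt (u * u + (v + 1 + t) * (v + 1 + t))).
  { unfold Cmod, xi, a0. simpl. f_equal. ring. }
  rewrite e1, e2, sqrt_div by nra.
  assert (0 < sqrt (u * u + (v + 1 + t) * (v + 1 + t))) by (apply sqrt_lt_R0; nra).
  unfold kappa. field. repeat split; auto; lra.
Qed.

End Main.

Lemma c_eta_pos (eta : R) : 0 < eta < 1 -> 0 < c_eta eta.
Proof. intros h. unfold c_eta. apply Rdiv_lt_0_compat; [lra|]. simpl. nra. Qed.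

Lemma w_unique (x1 y1 x2 y2 : R) (ze z : C) : 0 < Im ze ->
  z = (RtoC x1 + RtoC y1 * ze)%C -> z = (RtoC x2 + RtoC y2 * ze)%C -> x1 = x2 /\ y1 = y2.
Proof.
  intros h e1 e2. rewrite e1 in e2. destruct ze as [a b]. simpl in h.
  pose proof (f_equal fst e2) as f1. pose proof (f_equal snd e2) as f2.
  unfold RtoC, Cplus, Cmult in f1, f2. simpl in f1, f2.
  assert (y1 = y2) by (apply (Rmult_eq_reg_r b); lra). split; [|auto]. subst. lra.
Qed.

Theorem lemma3 (t : R) (ht : 0 < t < 1) :
  exists delta : R, 0 < delta /\
    forall eta : R, Rabs (eta - t) < delta ->
    forall (theta : R) (z : C), 0 < Im z ->
      exists! P : C * C,
        Sigma t theta P /\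
        forall Q : C * C, Sigma t theta Q ->
          Cmod (K_eta eta z Q) <= Cmod (K_eta eta z P).
Proof.
  exists (Rmin t (1 - t)). split; [apply Rmin_pos; lra|].
  intros eta heta theta z hz.
  assert (he : 0 < eta < 1).
  { apply Rabs_def2 in heta. pose proof (Rmin_l t (1-t)). pose proof (Rmin_r t (1-t)). lra. }
  pose proof (c_eta_pos eta he) as hc.
  destruct (Phi_max t (c_eta eta) ht hc) as [vs [hvs hmax]].
  set (Co := cos ((theta - PI) / 2)). set (Si := sin ((theta - PI) / 2)).
  assert (hD : Co*Co + Si*Si = 1) by (apply hD).
  set (zs := kk Co Si (0, vs)).
  assert (hzs : 0 < Im zs).
  { unfold zs. rewrite kk_im by (auto; simpl; lra). cbn [Re Im fst snd].
    apply Rdiv_lt_0_compat; auto.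
    destruct (Req_dec Si 0) as [e|e].
    - rewrite e in *. assert (Co*Co = 1) by lra. simpl. nra.
    - assert (0 < (Si*vs)^2) by (apply pow2_gt_0; intro h; apply Rmult_integral in h; destruct h; lra).
      pose proof (pow2_ge_0 (Co - Si*0)). lra. }
  set (ys := Im z / Im zs). set (xs := Re z - ys * Re zs).
  assert (hys : 0 < ys) by (apply Rdiv_lt_0_compat; auto).
  set (ws := (xs, ys) : C).
  assert (hzw : z = (RtoC (Re ws) + RtoC (Im ws) * zs)%C).
  { destruct z as [zr zi]. unfold ws, xs, ys. cbn [Re Im fst snd] in *.
    destruct zs as [a b]. cbn [Re Im fst snd] in *.
    unfold RtoC, Cplus, Cmult. simpl. apply injective_projections; simpl; field; lra. }
  assert (hxi : forall w, 0 < Im w -> exists u v, 0 < v /\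
            z = (RtoC (Re w) + RtoC (Im w) * kk Co Si (u, v))%C).
  { intros w hw.
    set (z0 := ((z - RtoC (Re w)) / RtoC (Im w))%C).
    assert (hwC : RtoC (Im w) <> 0%C) by (intro e; apply RtoC_inj in e; lra).
    assert (hz0 : Im z0 = Im z / Im w).
    { unfold z0. destruct z as [zr zi]. unfold RtoC, Cminus, Cplus, Copp, Cdiv, Cmult, Cinv. simpl.
      field. lra. }
    assert (hz0p : 0 < Im z0) by (rewrite hz0; apply Rdiv_lt_0_compat; auto).
    set (xi := kk Co (-Si) z0).
    assert (hD2 : Co*Co + (-Si)*(-Si) = 1) by lra.
    assert (hxip : 0 < Im xi).
    { unfold xi. rewrite (kk_im Co (-Si) hD2) by lra.
      apply Rdiv_lt_0_compat; auto.
      destruct (Req_dec Si 0) as [e|e].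
      - rewrite e in *. assert (Co*Co = 1) by lra. simpl. nra.
      - assert (0 < (-Si*Im z0)^2) by (apply pow2_gt_0; intro h; apply Rmult_integral in h; destruct h; lra).
        pose proof (pow2_ge_0 (Co - -Si*Re z0)). lra. }
    exists (Re xi), (Im xi). split; auto.
    replace (Re xi, Im xi) with xi by (destruct xi; reflexivity).
    unfold xi. rewrite kk_inv by (auto; lra).
    unfold z0. field. auto. }
  exists (horo (- (Ci * RtoC t))%C ws theta).
  assert (hKs : Cmod (K_eta eta z (horo (- (Ci * RtoC t))%C ws theta)) = kappa t theta * Phi t (c_eta eta) 0 vs).
  { apply K_formula; auto. }
  assert (hkap : 0 < kappa t theta).
  { unfold kappa. apply Rdiv_lt_0_compat; apply Cmod_gt_0; apply mm_nz; auto; simpl; lra. }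
  split.
  - split.
    + exists ws. split; auto.
    + intros Q [w [hw ->]].
      destruct (hxi w hw) as [u [v [hv hzv]]].
      rewrite hKs, (K_formula t eta theta ht w u v z hw hv hzv).
      apply Rmult_le_compat_l; [lra|]. apply (hmax u v hv).
  - intros P' [[w [hw ->]] hP'].
    destruct (hxi w hw) as [u [v [hv hzv]]].
    specialize (hP' (horo (- (Ci * RtoC t))%C ws theta) (ex_intro _ ws (conj hys eq_refl))).
    rewrite hKs, (K_formula t eta theta ht w u v z hw hv hzv) in hP'.
    destruct (hmax u v hv) as [hle heq].
    assert (Phi t (c_eta eta) 0 vs <= Phi t (c_eta eta) u v).
    { apply Rmult_le_reg_l with (kappa t theta); auto. }
    destruct (heq ltac:(lra)) as [-> ->].
    fold zs in hzv.
    destruct (w_unique _ _ _ _ zs z hzs hzw hzv) as [e1 e2].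
    f_equal. apply injective_projections; [exact e1 | exact e2].
Qed.
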